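(* Let $\alpha>0$. Let $u_0:\mathbb{R}\to[0,1]$ be uniformly continuous with $u_0>0$ on $\mathbb{R}$, $\liminf_{x\to-\infty}u_0>0$, $\lim_{x\to+\infty}u_0=0$, of class $C^2$ and nonincreasing on $[\xi_0,+\infty)$ for some $\xi_0>0$, and such that $\varphi_0:=-\ln u_0$ satisfies $\varphi_0'=o(\varphi_0^{-\alpha})$ and $\varphi_0''=o(\varphi_0')$ as $x\to+\infty$. Let $\rho>0$ and define $$w(t,x):=\exp\Big\{1-\big[(1+\varphi_0(x))^{\alpha+1}-\rho(\alpha+1)t\big]^{\frac{1}{\alpha+1}}\Big\},\qquad x_0(t):=\sup\Big\{x\in\mathbb{R}: u_0(x)=\exp\big(1-(\rho(\alpha+1)t+1)^{\frac{1}{\alpha+1}}\big)\Big\}.$$ Then there is $t^1>0$ such that $$w_x(t,x)+w_{xx}(t,x)\le 0\quad\text{for all } x\ge x_0(t)\text{ and } t\ge t^1.$$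
   Context: $w$ solves $w_t=\rho\, w/(1-\ln w)^\alpha$ with $w(0,\cdot)=u_0$; one has $w(t,x_0(t))=1$ and $0<w(t,x)\le1$ for $x\ge x_0(t)$. *)

(* Defs.v *)
From Stdlib Require Import Reals.
From Coquelicot Require Import Coquelicot.
Open Scope R_scope.

Definition phi0 (u0 : R -> R) (x : R) : R := - ln (u0 x).

Definition wfun (u0 : R -> R) (alpha rho : R) (t x : R) : R :=
  exp (1 - Rpower (Rpower (1 + phi0 u0 x) (alpha + 1) - rho * (alpha + 1) * t)
                  (1 / (alpha + 1))).

Definition level (alpha rho t : R) : R :=
  exp (1 - Rpower (rho * (alpha + 1) * t + 1) (1 / (alpha + 1))).

Definition x0 (u0 : R -> R) (alpha rho t : R) : Rbar :=
  Lub_Rbar (fun x => u0 x = level alpha rho t).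

Definition unif_continuous (f : R -> R) : Prop :=
  forall eps : R, 0 < eps -> exists delta : R, 0 < delta /\
    forall x y : R, Rabs (x - y) < delta -> Rabs (f x - f y) < eps.

Definition little_o_pinfty (f g : R -> R) : Prop :=
  forall eps : R, 0 < eps -> exists M : R, forall x : R, M <= x ->
    Rabs (f x) <= eps * Rabs (g x).

(* Main.v *)
Require Import Defs.
From Stdlib Require Import Reals Lra.
From Coquelicot Require Import Coquelicot.
Open Scope R_scope.

Definition E1 (a p : R) := exp ((a + 1) * ln (1 + p)).
Definition sF (a C p : R) := E1 a p - C.
Definition E2 (a C p : R) := exp (1 / (a + 1) * ln (sF a C p)).
Definition FF (a C p : R) := exp (1 - E2 a C p).
Definition HH (a C p : R) := E2 a C p * E1 a p / ((1 + p) * sF a C p).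
Definition F1 (a C p : R) := - FF a C p * HH a C p.
Definition F2 (a C p : R) := FF a C p * (HH a C p ^ 2 - HH a C p * a *
   (1 / (1 + p) - E1 a p / ((1 + p) * sF a C p))).

Lemma dFF a C p : 0 < a -> 0 < 1 + p -> 0 < sF a C p -> is_derive (FF a C) p (F1 a C p).
Proof.
intros Ha Hp Hs. unfold F1, HH, FF, E2, sF, E1 in *.
auto_derive. repeat split; lra.
unfold Rminus in *.
set (A := exp ((a + 1) * ln (1 + p))) in *.
set (G := exp (1 / (a + 1) * ln (A + - C))).
field. lra.
Qed.

Lemma dF1 a C p : 0 < a -> 0 < 1 + p -> 0 < sF a C p -> is_derive (F1 a C) p (F2 a C p).
Proof.
intros Ha Hp Hs. unfold F2, F1, HH, FF, E2, sF, E1 in *.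
auto_derive. repeat split; try lra. apply Rmult_integral_contrapositive_currified; lra.
unfold Rminus in *.
set (A := exp ((a + 1) * ln (1 + p))) in *.
set (G := exp (1 / (a + 1) * ln (A + - C))).
set (F := exp (1 + - G)).
field. lra.
Qed.

Lemma exp_le' x y : x <= y -> exp x <= exp y.
Proof. intros [H|H]. left; apply exp_increasing; auto. subst; lra. Qed.

Lemma key a C p f1 f2 : 0 < a -> 0 <= C -> 1 <= p -> 1 <= sF a C p -> 0 <= f1 ->
  Rabs f2 <= / 2 * Rabs f1 -> (a + 1) * (E1 a p / (1 + p)) * f1 <= / 2 ->
  F1 a C p * f1 + (F2 a C p * f1 ^ 2 + F1 a C p * f2) <= 0.
Proof.
intros Ha HC Hp Hs Hf1 Hf2 HK.
unfold F2, F1, HH, FF, E2 in *.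
set (s := sF a C p) in *.
assert (HA: s <= E1 a p) by (unfold s, sF; lra).
set (A := E1 a p) in *.
set (G := exp (1 / (a + 1) * ln s)).
set (F := exp (1 - G)).
assert (HG0 : 0 < G) by apply exp_pos.
assert (HF0 : 0 < F) by apply exp_pos.
assert (HGs : G <= s).
{ unfold G. rewrite <- (exp_ln s) at 2 by lra. apply exp_le'.
  assert (0 <= ln s) by (rewrite <- ln_1; apply ln_le; lra).
  assert (1 / (a + 1) <= 1) by (apply Rmult_le_reg_r with (a+1); [lra|]; field_simplify; lra).
  nra. }
set (K := A / (1 + p)).
assert (HK0 : 0 < K) by (unfold K; apply Rdiv_lt_0_compat; lra).
set (H := G * A / ((1 + p) * s)).
assert (HH1 : H = G * K / s) by (unfold H, K; field; lra).
assert (H0 : 0 < H) by (rewrite HH1; apply Rdiv_lt_0_compat; [apply Rmult_lt_0_compat|]; lra).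
assert (HHK : H <= K).
{ rewrite HH1. apply Rmult_le_reg_r with s; [lra|]. unfold Rdiv. rewrite Rmult_assoc, Rinv_l by lra. nra. }
assert (Hf2' : - f2 <= f1 / 2).
{ rewrite (Rabs_pos_eq f1) in Hf2 by lra.
  assert (- f2 <= Rabs f2) by (rewrite <- Rabs_Ropp; apply Rle_abs). lra. }
set (Q := - f1 + H * f1 ^ 2 - a * (1 / (1 + p) - K / s) * f1 ^ 2 - f2).
assert (E : - F * H * f1 + (F * (H ^ 2 - H * a * (1 / (1 + p) - A / ((1 + p) * s))) * f1 ^ 2 +
   - F * H * f2) = F * H * Q) by (unfold Q, K; field; lra).
rewrite E.
assert (Q <= 0).
{ unfold Q.
  assert (a * (1 / (1 + p)) * f1 ^ 2 >= 0).
  { apply Rle_ge. apply Rmult_le_pos; [apply Rmult_le_pos|]; try lra.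
    unfold Rdiv; rewrite Rmult_1_l; left; apply Rinv_0_lt_compat; lra. nra. }
  assert (a * (K / s) * f1 ^ 2 <= a * K * f1 ^ 2).
  { apply Rmult_le_compat_r; [apply pow2_ge_0|]. apply Rmult_le_compat_l; [lra|].
    apply Rmult_le_reg_r with s; [lra|]. unfold Rdiv. rewrite Rmult_assoc, Rinv_l by lra. nra. }
  assert (H * f1 ^ 2 <= K * f1 ^ 2) by (apply Rmult_le_compat_r; [apply pow2_ge_0 | lra]).
  assert (f1 * ((a + 1) * K * f1) <= f1 * / 2) by (apply Rmult_le_compat_l; [lra| unfold K; lra]).
  nra. }
assert (0 < F * H) by (apply Rmult_lt_0_compat; auto).
nra.
Qed.

Lemma Rpow_ge1 K b : 2 <= K -> 0 < b -> 1 < Rpower K b.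
Proof.
intros HK Hb. unfold Rpower. rewrite <- exp_0. apply exp_increasing.
assert (0 < ln K) by (rewrite <- ln_1; apply ln_increasing; lra). nra.
Qed.

Theorem lemma3p2 (alpha : R) (u0 : R -> R) (rho : R) :
  0 < alpha ->
  (forall x, 0 <= u0 x <= 1) ->
  unif_continuous u0 ->
  (forall x, 0 < u0 x) ->
  (* liminf_{x -> -oo} u0 > 0 *)
  (exists c M : R, 0 < c /\ forall x, x <= M -> c <= u0 x) ->
  is_lim u0 p_infty 0 ->
  (exists xi0 : R, 0 < xi0 /\
     (* C^2 on (xi0, +oo) *)
     (forall x, xi0 < x ->
        ex_derive u0 x /\ ex_derive (Derive u0) x /\
        continuous (Derive (Derive u0)) x) /\
     (* nonincreasing on [xi0, +oo) *)
     (forall x y, xi0 <= x -> x <= y -> u0 y <= u0 x)) ->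
  little_o_pinfty (Derive (phi0 u0)) (fun x => Rpower (phi0 u0 x) (- alpha)) ->
  little_o_pinfty (Derive (Derive (phi0 u0))) (Derive (phi0 u0)) ->
  0 < rho ->
  exists t1 : R, 0 < t1 /\
    forall t x : R, t1 <= t -> Rbar_le (x0 u0 alpha rho t) (Finite x) ->
      ex_derive (wfun u0 alpha rho t) x /\
      ex_derive (Derive (wfun u0 alpha rho t)) x /\
      Derive (wfun u0 alpha rho t) x
        + Derive (Derive (wfun u0 alpha rho t)) x <= 0.
Proof.
intros Ha Hb Huc Hpos [c [M [Hc HcM]]] Hlim [xi0 [Hxi0 [HC2 Hmono]]] Ho1 Ho2 Hrho.
assert (Hcont : forall y, continuity_pt u0 y).
{ intros y. unfold continuity_pt, continue_in, limit1_in, limit_in; simpl; unfold R_dist.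
  intros e He. destruct (Huc e He) as [d [Hd Hd']]. exists d; split; auto.
  intros z [_ Hz]. apply Hd'; auto. }
assert (Hln2 : 0 < ln 2) by (rewrite <- ln_1; apply ln_increasing; lra).
set (eps0 := / (2 * (alpha + 1) * exp (alpha * ln 2))).
assert (Heps0 : 0 < eps0).
{ unfold eps0. apply Rinv_0_lt_compat. pose proof (exp_pos (alpha * ln 2)).
  apply Rmult_lt_0_compat; lra. }
destruct (Ho1 eps0 Heps0) as [M1 HM1].
destruct (Ho2 (/2) ltac:(lra)) as [M2 HM2].
set (X := Rmax xi0 (Rmax M1 M2) + 1).
assert (HX1 : xi0 < X /\ M1 < X /\ M2 < X).
{ unfold X. pose proof (Rmax_l xi0 (Rmax M1 M2)). pose proof (Rmax_r xi0 (Rmax M1 M2)).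
  pose proof (Rmax_l M1 M2). pose proof (Rmax_r M1 M2). lra. }
assert (Hm : exists m, 0 < m /\ forall y, y <= X -> m <= u0 y).
{ destruct (continuity_ab_min u0 (Rmin M X) X) as [mx [Hmx1 Hmx2]].
  apply Rmin_r. intros; apply Hcont.
  exists (Rmin c (u0 mx)). split. apply Rmin_glb_lt; auto.
  intros y Hy. destruct (Rle_or_lt y M) as [HyM|HyM].
  - apply Rle_trans with c. apply Rmin_l. auto.
  - apply Rle_trans with (u0 mx). apply Rmin_r. apply Hmx1.
    pose proof (Rmin_l M X). lra. }
destruct Hm as [m [Hm0 HmX]].
set (K := Rmax 2 (2 - ln m)).
assert (HK2 : 2 <= K) by apply Rmax_l.
assert (HKm : 2 - ln m <= K) by apply Rmax_r.
assert (HRK : 1 < Rpower K (alpha + 1)) by (apply Rpow_ge1; lra).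
set (t1 := (Rpower K (alpha + 1) - 1) / (rho * (alpha + 1))).
assert (Hra : 0 < rho * (alpha + 1)) by (apply Rmult_lt_0_compat; lra).
assert (Ht1 : 0 < t1) by (unfold t1; apply Rdiv_lt_0_compat; lra).
exists t1. split; auto.
intros t x Ht Hx0.
set (C := rho * (alpha + 1) * t).
assert (HC0 : 0 <= C) by (unfold C; apply Rmult_le_pos; lra).
assert (HCK : Rpower K (alpha + 1) <= C + 1).
{ unfold C. assert (rho * (alpha + 1) * t1 = Rpower K (alpha + 1) - 1) by (unfold t1; field; lra).
  assert (rho * (alpha + 1) * t1 <= rho * (alpha + 1) * t) by (apply Rmult_le_compat_l; lra). lra. }
set (R1 := Rpower (C + 1) (1 / (alpha + 1))).
assert (HR1 : K <= R1).
{ unfold R1. replace K with (Rpower (Rpower K (alpha + 1)) (1 / (alpha + 1))).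
  apply Rle_Rpower_l. left; apply Rdiv_lt_0_compat; lra. lra.
  rewrite Rpower_mult. replace ((alpha + 1) * (1 / (alpha + 1))) with 1 by (field; lra).
  apply Rpower_1; lra. }
assert (Hlev : level alpha rho t = exp (1 - R1)) by reflexivity.
assert (Hlevm : level alpha rho t < m).
{ rewrite Hlev. rewrite <- (exp_ln m) by auto. apply exp_increasing. lra. }
assert (Hlev1 : level alpha rho t <= exp (-1)).
{ rewrite Hlev. apply exp_le'. lra. }
set (Lv := level alpha rho t) in *.
assert (HLv0 : 0 < Lv) by (rewrite Hlev; apply exp_pos).
assert (Hux : u0 x <= Lv).
{ destruct (Rle_or_lt (u0 x) Lv) as [h|h]; auto. exfalso.
  apply is_lim_spec in Hlim. destruct (Hlim (mkposreal Lv HLv0)) as [Mz HMz].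
  set (z := Rmax Mz x + 1).
  assert (Hz : Mz < z /\ x < z) by (unfold z; pose proof (Rmax_l Mz x); pose proof (Rmax_r Mz x); lra).
  specialize (HMz z (proj1 Hz)). simpl in HMz. rewrite Rminus_0_r in HMz.
  pose proof (Rle_abs (u0 z)).
  destruct (IVT (fun y => Lv - u0 y) x z) as [y [Hy1 Hy2]].
  { intros y. apply continuity_pt_minus. apply continuity_pt_const. intros ? ?; reflexivity. apply Hcont. }
  lra. lra. lra.
  assert (Hy : Rbar_le y (x0 u0 alpha rho t)).
  { apply (proj1 (Lub_Rbar_correct _)). unfold Lv in Hy2. lra. }
  pose proof (Rbar_le_trans _ _ _ Hy Hx0) as Hyx. simpl in Hyx.
  assert (y = x) by lra. subst y. lra. }
assert (HxX : X < x).
{ destruct (Rle_or_lt x X) as [h|h]; auto. specialize (HmX x h). lra. }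

set (phi := phi0 u0) in *.
assert (Hphi0 : forall y, 0 <= phi y).
{ intros y. unfold phi, phi0. assert (ln (u0 y) <= 0).
  { rewrite <- ln_1. apply ln_le. apply Hpos. apply Hb. } lra. }
assert (Hxi : xi0 < x) by lra.
assert (Hdphi : forall y, xi0 < y -> is_derive phi y (- (Derive u0 y / u0 y))).
{ intros y Hy. destruct (HC2 y Hy) as [Hd1 _]. specialize (Hpos y).
  unfold phi, phi0. auto_derive. split; auto. replace (Derive (fun x0 : R => u0 x0) y) with (Derive u0 y) by reflexivity; field; lra. }
assert (Hloc1 : locally x (fun y => xi0 < y)) by (apply open_gt; auto).
assert (Hphi1 : locally x (fun y => - (Derive u0 y / u0 y) = Derive phi y)).
{ apply (filter_imp (fun y => xi0 < y)); auto. intros y Hy.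
  symmetry. apply is_derive_unique. auto. }
assert (Hexd2 : ex_derive (Derive phi) x).
{ apply (ex_derive_ext_loc _ _ _ Hphi1). destruct (HC2 x Hxi) as [Hd1 [Hd2 _]].
  specialize (Hpos x). auto_derive. repeat split; auto. lra. }
set (p := phi x).
set (f1 := Derive phi x).
set (f2 := Derive (Derive phi) x).
assert (Hf1 : is_derive phi x f1) by (apply Derive_correct; eexists; apply Hdphi; auto).
assert (Hf2 : is_derive (Derive phi) x f2) by (apply Derive_correct; auto).
assert (HpR : R1 - 1 <= p).
{ unfold p, phi, phi0. assert (ln (u0 x) <= ln Lv) by (apply ln_le; auto).
  rewrite Hlev, ln_exp in H. lra. }
assert (Hp1 : 1 <= p) by lra.
assert (Hs1 : 1 <= sF alpha C p).
{ unfold sF, E1. assert (C + 1 <= exp ((alpha + 1) * ln (1 + p))); [|lra].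
  assert (HR1p : 0 < R1) by lra.
  assert (ln R1 <= ln (1 + p)) by (apply ln_le; lra).
  unfold R1, Rpower in H. rewrite ln_exp in H.
  rewrite <- (exp_ln (C + 1)) at 1 by lra. apply exp_le'.
  apply Rmult_le_compat_l with (r := alpha + 1) in H; [|lra].
  replace ((alpha + 1) * (1 / (alpha + 1) * ln (C + 1))) with (ln (C + 1)) in H by (field; lra).
  lra. }
assert (Hf1pos : 0 <= f1).
{ destruct (Rle_or_lt 0 f1) as [h|h]; auto. exfalso.
  apply is_derive_Reals in Hf1. destruct (Hf1 (- f1) ltac:(lra)) as [d Hd].
  assert (Hd0 := cond_pos d).
  specialize (Hd (d / 2) ltac:(lra)). rewrite Rabs_pos_eq in Hd by lra.
  specialize (Hd ltac:(lra)).
  assert (phi x <= phi (x + d / 2)).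
  { unfold phi, phi0. assert (ln (u0 (x + d / 2)) <= ln (u0 x)); [|lra].
    apply ln_le; auto. apply Hmono; lra. }
  assert (0 <= (phi (x + d / 2) - phi x) / (d / 2)).
  { apply Rmult_le_pos. lra. left; apply Rinv_0_lt_compat; lra. }
  pose proof (Rle_abs ((phi (x + d / 2) - phi x) / (d / 2) - f1)). lra. }
assert (Hf21 : Rabs f2 <= / 2 * Rabs f1) by (apply HM2; lra).
assert (HKf : (alpha + 1) * (E1 alpha p / (1 + p)) * f1 <= / 2).
{ specialize (HM1 x ltac:(lra)). fold f1 in HM1. fold p in HM1.
  rewrite (Rabs_pos_eq f1) in HM1 by lra.
  assert (HRp : 0 < Rpower p (- alpha)) by apply exp_pos.
  rewrite (Rabs_pos_eq _ (Rlt_le _ _ HRp)) in HM1.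
  assert (HE : E1 alpha p / (1 + p) * Rpower p (- alpha) <= exp (alpha * ln 2)).
  { unfold E1, Rpower. rewrite Rmult_plus_distr_r, Rmult_1_l, exp_plus, exp_ln by lra.
    replace (exp (alpha * ln (1 + p)) * (1 + p) / (1 + p) * exp (- alpha * ln p))
      with (exp (alpha * ln (1 + p) + - alpha * ln p)) by (rewrite exp_plus; field; lra).
    apply exp_le'. assert (ln (1 + p) <= ln 2 + ln p).
    { rewrite <- ln_mult by lra. apply ln_le; lra. } nra. }
  assert (HE0 : 0 <= E1 alpha p / (1 + p)).
  { unfold E1. left. apply Rdiv_lt_0_compat. apply exp_pos. lra. }
  assert (E1 alpha p / (1 + p) * f1 <= E1 alpha p / (1 + p) * (eps0 * Rpower p (- alpha)))
    by (apply Rmult_le_compat_l; auto).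
  assert (Hexp := exp_pos (alpha * ln 2)).
  assert (eps0 * (E1 alpha p / (1 + p) * Rpower p (- alpha)) <= eps0 * exp (alpha * ln 2))
    by (apply Rmult_le_compat_l; lra).
  assert (eps0 * exp (alpha * ln 2) = / (2 * (alpha + 1))) by (unfold eps0; field; lra).
  assert (H3 : E1 alpha p / (1 + p) * f1 <= / (2 * (alpha + 1))) by nra.
  apply Rmult_le_compat_l with (r := alpha + 1) in H3; [|lra].
  replace ((alpha + 1) * / (2 * (alpha + 1))) with (/ 2) in H3 by (field; lra). lra. }
change (wfun u0 alpha rho t) with (fun y => FF alpha C (phi y)).
assert (Hloc2 : locally x (fun y => 0 < sF alpha C (phi y))).
{ assert (Hd : ex_derive (fun y => sF alpha C (phi y)) x).
  { apply ex_derive_comp.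
    unfold sF, E1. auto_derive. fold p. lra. eexists; apply Hf1. }
  pose proof (ex_derive_continuous _ _ Hd) as Hc2.
  apply (Hc2 (fun z => 0 < z)). apply open_gt. fold p. lra. }
assert (Hw1 : forall y, xi0 < y -> 0 < sF alpha C (phi y) ->
   is_derive (fun y => FF alpha C (phi y)) y (Derive phi y * F1 alpha C (phi y))).
{ intros y Hy Hsy. apply (is_derive_comp (FF alpha C) phi).
  apply dFF; auto. specialize (Hphi0 y); lra.
  apply Derive_correct. eexists; apply Hdphi; auto. }
assert (Hw1loc : locally x (fun y => Derive phi y * F1 alpha C (phi y) =
    Derive (fun y => FF alpha C (phi y)) y)).
{ apply (filter_imp (fun y => xi0 < y /\ 0 < sF alpha C (phi y))).
  intros y [Hy1 Hy2]. symmetry. apply is_derive_unique. auto.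
  apply filter_and; auto. }
assert (Hw2 : is_derive (fun y => Derive phi y * F1 alpha C (phi y)) x
   (f2 * F1 alpha C p + f1 * (f1 * F2 alpha C p))).
{ apply (is_derive_mult (Derive phi) (fun y => F1 alpha C (phi y))).
  exact Hf2.
  apply (is_derive_comp (F1 alpha C) phi). apply dF1; [auto|lra|lra]. exact Hf1.
  intros; apply Rmult_comm. }
assert (Hw2' := is_derive_ext_loc _ _ _ _ Hw1loc Hw2).
assert (Hw1x := Hw1 x Hxi ltac:(fold p; lra)).
split. eexists; apply Hw1x.
split. eexists; apply Hw2'.
assert (EA : Derive (fun y : R => FF alpha C (phi y)) x = Derive phi x * F1 alpha C (phi x))
  by (apply is_derive_unique; exact Hw1x).
assert (EB : Derive (Derive (fun y : R => FF alpha C (phi y))) x =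
   f2 * F1 alpha C p + f1 * (f1 * F2 alpha C p))
  by (apply is_derive_unique; exact Hw2').
rewrite EA, EB.
fold f1 p.
pose proof (key alpha C p f1 f2 Ha HC0 Hp1 Hs1 Hf1pos Hf21 HKf).
replace (f1 * F1 alpha C p + (f2 * F1 alpha C p + f1 * (f1 * F2 alpha C p)))
  with (F1 alpha C p * f1 + (F2 alpha C p * f1 ^ 2 + F1 alpha C p * f2)) by ring.
auto.
Qed.
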